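(* Under Assumptions 1–4 below, the iterates of Algorithm 2Direction satisfy, for every $t\ge0$, $$\mathbb E_t\big[\|g^{t+1}-\nabla f(y^{t+1})\|^2\big]\le\frac{2\omega}{n^2}\sum_{i=1}^n\|\nabla f_i(z^t)-h_i^t\|^2+\frac{4\omega L_{\max}}{n}\big(f(z^t)-f(y^{t+1})-\langle\nabla f(y^{t+1}),z^t-y^{t+1}\rangle\big).$$
   Context: Setting: $f=\frac1n\sum_{i=1}^nf_i$, $f_i:\mathbb R^d\to\mathbb R$. Assumption 1: each $f_i$ is $L_i$-smooth, $L_{\max}=\max_iL_i$, and $\widehat L>0$ satisfies $\frac1n\sum_i\|\nabla f_i(x)-\nabla f_i(y)\|^2\le\widehat L^2\|x-y\|^2$ for all $x,y$. Assumption 2: $f$ is $L$-smooth. Assumption 3: each $f_i$ is convex and $f$ is $\mu$-strongly convex ($\mu\ge0$) with minimizer $x^*$. Assumption 4: the randomness of all compressors is drawn independently (of each other, of the coins $c^t$, and of the past). Compressor classes: $\mathbb U(\omega)$ ($\omega\ge0$) = stochastic maps $\mathcal C$ with $\mathbb E\mathcal C(x)=x$, $\mathbb E\|\mathcal C(x)-x\|^2\le\omega\|x\|^2$; $\mathbb B(\alpha)$ ($\alpha\in(0,1]$) = possibly stochastic maps with $\mathbb E\|\mathcal C(x)-x\|^2\le(1-\alpha)\|x\|^2$. Algorithm 2Direction: compressors $\mathcal C_i^{D,y},\mathcal C_i^{D,z}\in\mathbb U(\omega)$ (workers), $\mathcal C^P\in\mathbb B(\alpha)$ (server); parameters $\bar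 L>0$, $\mu\ge0$, $p\in(0,1]$, $\Gamma_0\ge1$, $\tau\in(0,1]$, $x^0,h_1^0,\dots,h_n^0,k^0,v^0\in\mathbb R^d$. Set $\beta=1/(\omega+1)$, $w^0=z^0=u^0=x^0$, $h^0=\frac1n\sum_ih_i^0$, $\theta_{\min}=\frac14\min\{1,\alpha/p,\tau/p,\beta/p\}$. For $t=0,1,\dots$: let $\bar\theta_{t+1}$ be the largest root of $p\bar L\Gamma_t\theta^2+p(\bar L+\Gamma_t\mu)\theta-(\bar L+\Gamma_t\mu)=0$, $\theta_{t+1}=\min\{\bar\theta_{t+1},\theta_{\min}\}$, $\gamma_{t+1}=p\theta_{t+1}\Gamma_t/(1-p\theta_{t+1})$, $\Gamma_{t+1}=\Gamma_t+\gamma_{t+1}$; $y^{t+1}=\theta_{t+1}w^t+(1-\theta_{t+1})z^t$; $m_i^{t,y}=\mathcal C_i^{D,y}(\nabla f_i(y^{t+1})-h_i^t)$; $g^{t+1}=h^t+\frac1n\sum_im_i^{t,y}$; $u^{t+1}=\arg\min_x\{\langle g^{t+1},x\rangle+\frac{\bar L+\Gamma_t\mu}{2\gamma_{t+1}}\|x-u^t\|^2+\frac\mu2\|x-y^{t+1}\|^2\}$; $q^{t+1}=\arg\min_x\{\langle k^t,x\rangle+\frac{\bar L+\Gamma_t\mu}{2\gamma_{t+1}}\|x-w^t\|^2+\frac\mu2\|x-y^{t+1}\|^2\}$; $w^{t+1}=q^{t+1}+\mathcal C^P(u^{t+1}-q^{t+1})$; $x^{t+1}=\theta_{t+1}u^{t+1}+(1-\theta_{t+1})z^t$;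 draw $c^t\sim\mathrm{Bernoulli}(p)$, and set $(k^{t+1},z^{t+1})=(v^t,x^{t+1})$ if $c^t=1$, $(k^{t+1},z^{t+1})=(k^t,z^t)$ if $c^t=0$; $m_i^{t,z}=\mathcal C_i^{D,z}(\nabla f_i(z^{t+1})-h_i^t)$; $h_i^{t+1}=h_i^t+\beta m_i^{t,z}$; $v^{t+1}=(1-\tau)v^t+\tau(h^t+\frac1n\sum_im_i^{t,z})$; $h^{t+1}=h^t+\frac\beta n\sum_im_i^{t,z}$. $\mathbb E_t$ denotes conditional expectation given the randomness of the first $t$ iterations. *)

(* Defs.v *)
From HB Require Import structures.
From mathcomp Require Import all_boot all_order all_algebra.
From mathcomp Require Import all_classical all_reals all_analysis.
Set Implicit Arguments. Unset Strict Implicit. Unset Printing Implicit Defensive.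
Import Order.TTheory GRing.Theory Num.Theory.
Import numFieldNormedType.Exports.
Local Open Scope classical_set_scope.
Local Open Scope ring_scope.

Section Defs.
Variable R : realType.
Variable d : nat.
Notation vec := 'rV[R]_d.

Definition dotv (x y : vec) : R := \sum_(j < d) x 0 j * y 0 j.
Definition sqnorm (x : vec) : R := dotv x x.
Definition enorm (x : vec) : R := Num.sqrt (sqnorm x).

Definition grad (f : vec -> R) (x : vec) : vec :=
  \row_(j < d) ('D_(delta_mx 0 j) f x).

Definition smooth (L : R) (f : vec -> R) : Prop :=
  (forall x, differentiable f x) /\
  (forall x y, enorm (grad f x - grad f y) <= L * enorm (x - y)).

Definition convex_fun (f : vec -> R) : Prop :=
  forall (x y : vec) (a : R), 0 <= a <= 1 ->
    f (a *: x + (1 - a) *: y) <= a * f x + (1 - a) * f y.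

Definition strongly_convex (mu : R) (f : vec -> R) : Prop :=
  forall x y : vec, f x + dotv (grad f x) (y - x) + mu / 2 * sqnorm (y - x) <= f y.

Definition avgf (n : nat) (fs : 'I_n -> vec -> R) : vec -> R :=
  fun x => n%:R^-1 * \sum_(i < n) fs i x.

Definition Lmax (n : nat) (L : 'I_n -> R) : R := \big[Num.max/0]_(i < n) L i.

(* Compressor class U(omega): a stochastic map, its randomness drawn from
   the probability space (Omega, P): C : Omega -> (R^d -> R^d). *)
Definition unbiased_compressor {dd} {Omega : measurableType dd}
    (P : probability Omega R) (omega : R) (C : Omega -> vec -> vec) : Prop :=
  forall x : vec,
    (forall j : 'I_d, measurable_fun setT (fun w => C w x 0 j)) /\
    (forall j : 'I_d, P.-integrable setT (fun w => (C w x 0 j)%:E) /\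
                      (\int[P]_w (C w x 0 j)%:E = (x 0 j)%:E)%E) /\
    (\int[P]_w (sqnorm (C w x - x))%:E <= (omega * sqnorm x)%:E)%E.

(* Mutual independence of a finite family of random vectors X i : Omega -> R^d
   (product rule over the measurable rectangles of R^d, which generate the
   Borel sigma-algebra of R^d and form a pi-system; taking B i j = setT for
   the indices outside a subfamily gives the rule for every subfamily). *)
Definition indep_rvecs {dd} {Omega : measurableType dd}
    (P : probability Omega R) (n : nat) (X : 'I_n -> Omega -> vec) : Prop :=
  forall B : 'I_n -> 'I_d -> set R,
    (forall i j, measurable (B i j)) ->
    fine (P [set w | forall i j, B i j (X i w 0 j)]) =
    \prod_(i < n) fine (P [set w | forall j, B i j (X i w 0 j)]).

(* Assumption 4 (for the worker compressors C_i^{D,y}): their randomness is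
   drawn independently, so for any inputs the outputs are independent. *)
Definition indep_compressors {dd} {Omega : measurableType dd}
    (P : probability Omega R) (n : nat) (C : 'I_n -> Omega -> vec -> vec) : Prop :=
  forall xs : 'I_n -> vec, indep_rvecs P (fun i w => C i w (xs i)).

End Defs.

(* Main.v *)
Require Import Defs.
From HB Require Import structures.
From mathcomp Require Import all_boot all_order all_algebra.
From mathcomp Require Import all_classical all_reals all_analysis.
From mathcomp Require Import ring lra.
From mathcomp Require Import measurable_realfun.
Import Order.TTheory GRing.Theory Num.Theory.
Import numFieldNormedType.Exports.
Local Open Scope classical_set_scope.
Local Open Scope ring_scope.
Set Implicit Arguments. Unset Strict Implicit. Unset Printing Implicit Defensive.


Section Ana.
Variable R : realType.
Variable d : nat.
Local Notation vec := 'rV[R]_d.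

Lemma dotvC (a b : vec) : dotv a b = dotv b a.
Proof. by rewrite /dotv; apply: eq_bigr => j _; rewrite mulrC. Qed.
Lemma dotvDr (a b c : vec) : dotv a (b + c) = dotv a b + dotv a c.
Proof. by rewrite /dotv -big_split; apply: eq_bigr => j _; rewrite !mxE mulrDr. Qed.
Lemma dotvBr (a b c : vec) : dotv a (b - c) = dotv a b - dotv a c.
Proof. by rewrite /dotv -sumrB; apply: eq_bigr => j _; rewrite !mxE mulrBr. Qed.
Lemma dotvZr (a b : vec) k : dotv a (k *: b) = k * dotv a b.
Proof. by rewrite /dotv mulr_sumr; apply: eq_bigr => j _; rewrite !mxE mulrCA. Qed.
Lemma dotvDl (a b c : vec) : dotv (b + c) a = dotv b a + dotv c a.
Proof. by rewrite dotvC dotvDr !(dotvC a). Qed.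
Lemma dotvBl (a b c : vec) : dotv (b - c) a = dotv b a - dotv c a.
Proof. by rewrite dotvC dotvBr !(dotvC a). Qed.
Lemma dotvZl (a b : vec) k : dotv (k *: b) a = k * dotv b a.
Proof. by rewrite dotvC dotvZr dotvC. Qed.
Lemma sqnorm_ge0 (a : vec) : 0 <= sqnorm a.
Proof. by rewrite /sqnorm /dotv; apply: sumr_ge0 => j _; rewrite -expr2 sqr_ge0. Qed.
Lemma enorm_ge0 (a : vec) : 0 <= enorm a.
Proof. exact: sqrtr_ge0. Qed.
Lemma enorm_sq (a : vec) : enorm a ^+ 2 = sqnorm a.
Proof. by rewrite /enorm sqr_sqrtr // sqnorm_ge0. Qed.
Lemma sqnormZ (a : vec) k : sqnorm (k *: a) = k ^+ 2 * sqnorm a.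
Proof. by rewrite /sqnorm dotvZl dotvZr mulrA -expr2. Qed.
Lemma enormZ (a : vec) k : enorm (k *: a) = `|k| * enorm a.
Proof. by rewrite /enorm sqnormZ sqrtrM ?sqr_ge0 // sqrtr_sqr. Qed.

Lemma sqnorm_eq0 (a : vec) : sqnorm a = 0 -> a = 0.
Proof.
rewrite /sqnorm /dotv => /eqP; rewrite psumr_eq0; last by move=> j _; rewrite -expr2 sqr_ge0.
move=> /allP H; apply/rowP => j; rewrite mxE.
by have := H j (mem_index_enum j); rewrite implyTb -expr2 sqrf_eq0 => /eqP.
Qed.

Lemma CS (a b : vec) : dotv a b <= enorm a * enorm b.
Proof.
have [a0|] := eqVneq (sqnorm a) 0.
  by rewrite (sqnorm_eq0 a0) /dotv big1 ?mulr_ge0 ?enorm_ge0 // => j _; rewrite mxE mul0r.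
have [b0|] := eqVneq (sqnorm b) 0.
  by rewrite (sqnorm_eq0 b0) /dotv big1 ?mulr_ge0 ?enorm_ge0 // => j _; rewrite mxE mulr0.
move=> nb na.
have pa : 0 < enorm a by rewrite /enorm sqrtr_gt0 lt_def na sqnorm_ge0.
have pb : 0 < enorm b by rewrite /enorm sqrtr_gt0 lt_def nb sqnorm_ge0.
set s := enorm b / enorm a.
have sp : 0 < s by rewrite divr_gt0.
have key : 2 * dotv a b <= s * sqnorm a + s^-1 * sqnorm b.
  rewrite /sqnorm /dotv !mulr_sumr -big_split /=; apply: ler_sum => j _.
  have : 0 <= s^-1 * (s * a 0 j - b 0 j) ^+ 2 by rewrite mulr_ge0 ?sqr_ge0 // invr_ge0 ltW.
  have sn : s != 0 by rewrite gt_eqF.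
  move=> H; rewrite -subr_ge0; apply: le_trans H _; rewrite le_eqVlt; apply/orP; left; apply/eqP.
  by field.
rewrite -!enorm_sq /s in key.
have : 2 * dotv a b <= 2 * (enorm a * enorm b).
  apply: le_trans key _; rewrite le_eqVlt; apply/orP; left; apply/eqP.
  by field; rewrite ?gt_eqF.
by rewrite ler_pM2l.
Qed.
End Ana.



Section Ana2.
Variable R : realType.
Variable d : nat.
Local Notation vec := 'rV[R]_d.

Lemma D_dot (f : vec -> R) p v : differentiable f p -> 'D_v f p = dotv (grad f p) v.
Proof.
move=> df; rewrite deriveE // {1}(row_sum_delta v) linear_sum /dotv.
apply: eq_bigr => j _; rewrite linearZ /= mxE deriveE // mulrC.
by [].
Qed.

Lemma phi_derive (f : vec -> R) (y v : vec) (t : R) :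
  (forall x, differentiable f x) ->
  is_derive t 1 (fun s : R => f (y + s *: v)) (dotv (grad f (y + t *: v)) v).
Proof.
move=> df.
have E : (fun h : R => h^-1 *: (((fun s : R => f (y + s *: v)) \o shift t) (h *: 1) - f (y + t *: v)))
  = (fun h : R => h^-1 *: ((f \o shift (y + t *: v)) (h *: v) - f (y + t *: v))).
  apply/funext => h /=; congr (_ *: (f _ - _)).
  by rewrite [h%:A]mulr1 scalerDl addrCA addrA.
have dv : derivable f (y + t *: v) v by apply: diff_derivable.
split.
  by rewrite /derivable E.
by rewrite /derive E -D_dot.
Qed.
End Ana2.



Section Ana3.
Variable R : realType.
Variable d : nat.
Local Notation vec := 'rV[R]_d.

Lemma descent (f : vec -> R) L x y : smooth L f ->
  f x <= f y + dotv (grad f y) (x - y) + L / 2 * sqnorm (x - y).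
Proof.
move=> [df lip]; set v := x - y.
set c0 := dotv (grad f y) v; set K := L * sqnorm v.
pose phi := fun s : R => f (y + s *: v).
pose F := phi - c0 \*: (@id R) - (K / 2) \*: ((@id R) * (@id R)).
have HF : forall s : R, is_derive s 1 F (dotv (grad f (y + s *: v)) v - c0 *: 1 - (K/2) *: (s *: 1 + s *: 1)).
  move=> s.
  have h1 := phi_derive y v s df.
  have h2 : is_derive s 1 (c0 \*: (@id R)) (c0 *: 1) by apply: is_deriveZ.
  have h3 : is_derive s (1:R) ((@id R) * (@id R)) (s *: 1 + s *: 1) by apply: is_deriveM.
  exact: is_deriveB (is_deriveB h1 h2) (is_deriveZ (K/2) h3).
have cF : {within `[0, 1], continuous F}.
  apply: derivable_within_continuous => s _; by have [] := HF s.
have [c /andP[c0' c1] Hc] := MVT_segment ler01 (fun s _ => HF s) cF.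
have E : forall s, F s = f (y + s *: v) - c0 * s - K / 2 * (s * s).
  move=> s; rewrite /F /phi /=.
  by rewrite !fctE /=.
have c0le : 0 <= c by move: c0'; rewrite bnd_simp.
rewrite !E scale0r scale1r addr0 ![_%:A]mulr1 in Hc.
have xE : y + v = x by rewrite /v addrC subrK.
rewrite xE in Hc.
have key : dotv (grad f (y + c *: v)) v - c0 <= K * c.
  rewrite /c0 -dotvBl; apply: le_trans (CS _ _) _.
  apply: le_trans (ler_wpM2r (enorm_ge0 _) (lip _ _)) _.
  rewrite addrC addKr enormZ ger0_norm // /K -enorm_sq.
  by rewrite le_eqVlt; apply/orP; left; apply/eqP; ring.
have H2 : (K / 2) *: (c + c) = K * c.
  by rewrite /GRing.scale /= mulrDr -mulrDl -splitr.
rewrite H2 in Hc.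
rewrite /K in Hc key *; lra.
Qed.
End Ana3.



Section Ana4.
Variable R : realType.
Variable d : nat.
Local Notation vec := 'rV[R]_d.

Lemma foc (f : vec -> R) x y : convex_fun f -> differentiable f y ->
  f y + dotv (grad f y) (x - y) <= f x.
Proof.
move=> cf dfy; rewrite -D_dot //; set v := x - y.
have dv : derivable f y v by apply: diff_derivable.
rewrite -lerBrDl.
rewrite /derive (cvg_at_rightE _ 0) //.
apply: limr_le.
  rewrite -(cvg_at_rightE (fun h : R => h^-1 *: ((f \o shift y) (h *: v) - f y))) //.
  apply: cvg_trans dv; apply: cvg_app.
  move=> A [e egt0 Ae]; exists e => // z ze zgt0; apply: Ae => //.
  exact/lt0r_neq0.
near=> h.
have h0 : 0 < h by near: h; exact: nbhs_right_gt.
have h1 : h < 1 by near: h; exact: nbhs_right_lt.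
have := cf x y h; rewrite (ltW h0) (ltW h1) => /(_ isT).
have -> : h *: x + (1 - h) *: y = h *: v + y.
  rewrite /v scalerBr scalerBl scale1r.
  by rewrite addrCA addrC.
move=> H; rewrite /= /GRing.scale /= ler_pdivrMl //.
move: H; rewrite /GRing.scale /= => H; nra.
Unshelve. all: by end_near.
Qed.
End Ana4.



Section Ana5.
Variable R : realType.
Variable d : nat.
Local Notation vec := 'rV[R]_d.

Lemma sqnormN (a : vec) : sqnorm (- a) = sqnorm a.
Proof. by rewrite -scaleN1r sqnormZ sqrrN expr1n mul1r. Qed.

Lemma cocoercive (f : vec -> R) L y z : 0 < L -> smooth L f -> convex_fun f ->
  sqnorm (grad f y - grad f z) <= 2 * L * (f z - f y - dotv (grad f y) (z - y)).
Proof.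
move=> L0 sm cf; have [df _] := sm.
set D := grad f z - grad f y.
set u := z + (- L^-1) *: D.
have a := foc u cf (df y).
have b := descent u z sm.
have e1 : u - z = (- L^-1) *: D by rewrite /u addrC addKr.
have e2 : u - y = (z - y) + (- L^-1) *: D by rewrite /u addrAC.
rewrite e2 dotvDr dotvZr in a.
rewrite e1 dotvZr sqnormZ in b.
have S : sqnorm D = dotv (grad f z) D - dotv (grad f y) D by rewrite /sqnorm dotvBl.
have -> : grad f y - grad f z = - D by rewrite /D opprB.
rewrite sqnormN.
have key : L^-1 / 2 * sqnorm D <= f z - f y - dotv (grad f y) (z - y).
  have E : L / 2 * ((- L^-1) ^+ 2 * sqnorm D) = L^-1 / 2 * sqnorm D.
    by rewrite sqrrN; field; rewrite gt_eqF.
  rewrite E in b; rewrite S in b E *; lra.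
have -> : sqnorm D = 2 * L * (L^-1 / 2 * sqnorm D) by field; rewrite gt_eqF.
by rewrite ler_wpM2l // mulr_ge0 // ltW.
Qed.
End Ana5.



Section Ana6.
Variable R : realType.
Variable d : nat.
Local Notation vec := 'rV[R]_d.

Lemma grad_avg n (fs : 'I_n -> vec -> R) x : (forall i, differentiable (fs i) x) ->
  grad (avgf fs) x = n%:R^-1 *: \sum_(i < n) grad (fs i) x.
Proof.
move=> df; have -> : avgf fs = n%:R^-1 \*: \sum_(i < n) fs i.
  by apply/funext => w; rewrite /avgf /= fct_sumE.
apply/rowP => j; rewrite !mxE deriveZ; last first.
  by apply: derivable_sum => i; apply: diff_derivable.
rewrite derive_sum; last by move=> i; apply: diff_derivable.
by rewrite summxE; congr (_ * _); apply: eq_bigr => i _; rewrite mxE.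
Qed.

Lemma sqnormD2 (b c : vec) : sqnorm (b + c) <= 2 * sqnorm b + 2 * sqnorm c.
Proof.
rewrite /sqnorm /dotv !mulr_sumr -big_split /=; apply: ler_sum => j _; rewrite !mxE; have := sqr_ge0 (b 0 j - c 0 j); nra.
Qed.

Lemma cocoercive_max (f : vec -> R) L M y z : smooth L f -> convex_fun f -> L <= M -> 0 <= M ->
  sqnorm (grad f y - grad f z) <= 2 * M * (f z - f y - dotv (grad f y) (z - y)).
Proof.
move=> sm cf LM; rewrite le_eqVlt => /orP[/eqP M0|M0].
  have [df lip] := sm.
  have : enorm (grad f y - grad f z) <= 0.
    apply: le_trans (lip _ _) _; rewrite -M0 in LM.
    by apply: mulr_le0_ge0 => //; exact: enorm_ge0.
  move=> H; have E : enorm (grad f y - grad f z) = 0 by apply/eqP; rewrite eq_le H enorm_ge0.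
  rewrite -enorm_sq E -M0 expr0n /=.
  by rewrite mulr0 mul0r.
apply: (@cocoercive R d f M y z) => //; have [df lip] := sm; split => // a b.
apply: le_trans (lip a b) _; apply: ler_wpM2r => //; exact: enorm_ge0.
Qed.

Lemma det_bound n (fs : 'I_n -> vec -> R) (L : 'I_n -> R) (hs : 'I_n -> vec) y z omega :
  (0 < n)%N -> (forall i, smooth (L i) (fs i)) -> (forall i, convex_fun (fs i)) -> 0 <= omega ->
  omega / (n%:R ^+ 2) * \sum_(i < n) sqnorm (grad (fs i) y - hs i) <=
  (2 * omega / (n%:R ^+ 2)) * \sum_(i < n) sqnorm (grad (fs i) z - hs i)
  + (4 * omega * Lmax L / n%:R) * (avgf fs z - avgf fs y - dotv (grad (avgf fs) y) (z - y)).
Proof.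
move=> n0 sm cf om.
have df : forall i x, differentiable (fs i) x by move=> i x; have [] := sm i.
have M0 : 0 <= Lmax L by rewrite /Lmax; exact: bigmax_ge_id.
have LM : forall i, L i <= Lmax L by move=> i; exact: le_bigmax.
set Di := fun i => fs i z - fs i y - dotv (grad (fs i) y) (z - y).
have Df : avgf fs z - avgf fs y - dotv (grad (avgf fs) y) (z - y) = n%:R^-1 * \sum_(i < n) Di i.
  rewrite grad_avg // dotvZl /avgf -!mulrBr; congr (_ * _).
  rewrite /Di !sumrB; congr (_ - _).
  rewrite /dotv exchange_big /=; apply: eq_bigr => j _; rewrite summxE mulr_suml.
  by apply: eq_bigr => i _; rewrite !mxE.
have step : forall i, sqnorm (grad (fs i) y - hs i) <=
    2 * sqnorm (grad (fs i) z - hs i) + 2 * (2 * Lmax L * Di i).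
  move=> i; have -> : grad (fs i) y - hs i = (grad (fs i) z - hs i) + (grad (fs i) y - grad (fs i) z).
    by rewrite [RHS]addrC addrA subrK.
  apply: le_trans (sqnormD2 _ _) _; rewrite lerD2l ler_wpM2l //.
  exact: cocoercive_max.
have nR : 0 < n%:R :> R by rewrite ltr0n.
have sum : \sum_(i < n) sqnorm (grad (fs i) y - hs i) <=
    2 * \sum_(i < n) sqnorm (grad (fs i) z - hs i) + 4 * Lmax L * \sum_(i < n) Di i.
  apply: le_trans (ler_sum _ (fun i _ => step i)) _; rewrite big_split /= -!mulr_sumr.
  by rewrite le_eqVlt; apply/orP; left; apply/eqP; ring.
rewrite Df.
have -> : 2 * omega / n%:R ^+ 2 * \sum_(i < n) sqnorm (grad (fs i) z - hs i) +
  4 * omega * Lmax L / n%:R * (n%:R^-1 * \sum_(i < n) Di i) =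
  omega / n%:R ^+ 2 * (2 * \sum_(i < n) sqnorm (grad (fs i) z - hs i) + 4 * Lmax L * \sum_(i < n) Di i).
  by field; rewrite gt_eqF.
by rewrite ler_wpM2l // divr_ge0 // exprn_ge0 // ltW.
Qed.
End Ana6.



Section Prob1.
Context {R : realType} {dd : measure_display} {Omega : measurableType dd} (P : probability Omega R).
Local Open Scope ereal_scope.

Lemma indep_mean (U V : Omega -> R) :
  measurable_fun setT U -> measurable_fun setT V ->
  P.-integrable setT (fun w => (U w)%:E) -> P.-integrable setT (fun w => (V w)%:E) ->
  P.-integrable setT (fun w => (U w * V w)%R%:E) ->
  (forall A B : set R, measurable A -> measurable B ->
     P (U @^-1` A `&` V @^-1` B) = P (U @^-1` A) * P (V @^-1` B)) ->
  \int[P]_w (U w * V w)%R%:E = \int[P]_w (U w)%:E * \int[P]_w (V w)%:E.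
Proof.
move=> mU mV iU iV iUV ind.
pose XU : {mfun Omega >-> R} := MeasurableFun.Pack (MeasurableFun.Class (isMeasurableFun.Build _ _ _ _ _ mU)).
pose XV : {mfun Omega >-> R} := MeasurableFun.Pack (MeasurableFun.Class (isMeasurableFun.Build _ _ _ _ _ mV)).
have mW : measurable_fun setT (fun w => (U w, V w)) by apply: measurable_fun_pair.
pose XW : {mfun Omega >-> (R * R)%type} := MeasurableFun.Pack (MeasurableFun.Class (isMeasurableFun.Build _ _ _ _ _ mW)).
pose mu1 := distribution P XU.
pose mu2 := distribution P XV.
pose mu := distribution P XW.
have heq : forall X, measurable X -> (mu1 \x mu2) X = mu X.
  apply: product_measure_unique => A B mA mB.
  by rewrite /mu /mu1 /mu2 /distribution /pushforward /= -ind.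
have mf : measurable_fun setT (fun p : R * R => (p.1 * p.2)%R%:E).
  by apply/measurable_EFinP; apply: measurable_funM; [exact: measurable_fst | exact: measurable_snd].
have mid : measurable_fun setT (fun x : R => x%:E) by apply/measurable_EFinP.
have E1 : \int[P]_w (U w * V w)%R%:E = \int[mu]_p (p.1 * p.2)%R%:E.
  by rewrite integral_distribution.
have imu : mu.-integrable setT (fun p : R * R => (p.1 * p.2)%R%:E).
  exact: integrable_pushforward.
have E2 : \int[mu]_p (p.1 * p.2)%R%:E = \int[mu1 \x mu2]_p (p.1 * p.2)%R%:E.
  by apply: eq_measure_integral => A mA _; apply/esym/heq.
have iprod : (mu1 \x mu2).-integrable setT (fun p : R * R => (p.1 * p.2)%R%:E).
  apply/integrableP; split => //.
  rewrite (eq_measure_integral mu); last by move=> A mA _; apply: heq.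
  by move/integrableP: imu => [].
have i2 : mu2.-integrable setT (fun x : R => x%:E) by exact: integrable_pushforward.
have c2 : \int[mu2]_y y%:E = \int[P]_w (V w)%:E by rewrite integral_distribution.
have cf : \int[P]_w (V w)%:E \is a fin_num by exact: integrable_fin_num.
have c1 : \int[mu1]_y y%:E = \int[P]_w (U w)%:E by rewrite integral_distribution.
have i1 : mu1.-integrable setT (fun x : R => x%:E) by exact: integrable_pushforward.
rewrite E1 E2 -integral12_prod_meas1 // /fubini_F /=.
under eq_integral => x _.
  rewrite (_ : \int[mu2]_y (x * y)%R%:E = x%:E * \int[mu2]_y y%:E); last first.
    by rewrite -integralZl.
  rewrite c2 -(fineK cf).
  over.
by rewrite /= integralZr // c1 fineK.
Qed.
End Prob1.



Section Prob2.
Context {R : realType} {d : nat} {dd : measure_display} {Omega : measurableType dd} (P : probability Omega R).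
Local Notation vec := 'rV[R]_d.

Lemma dotv_suml n (v : 'I_n -> vec) b : dotv (\sum_(i < n) v i) b = \sum_(i < n) dotv (v i) b.
Proof.
rewrite /dotv exchange_big /=; apply: eq_bigr => j _; rewrite summxE mulr_suml.
by apply: eq_bigr.
Qed.

Lemma sqnorm_sum n (v : 'I_n -> vec) :
  sqnorm (\sum_(i < n) v i) = \sum_(i < n) \sum_(k < n) dotv (v i) (v k).
Proof.
rewrite /sqnorm dotv_suml; apply: eq_bigr => i _.
by rewrite dotvC dotv_suml; apply: eq_bigr => k _; apply: dotvC.
Qed.


Lemma int_le (f g : Omega -> R) : measurable_fun setT f ->
  P.-integrable setT (fun w => (g w)%:E) -> (forall w, `|f w| <= g w) ->
  P.-integrable setT (fun w => (f w)%:E).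
Proof.
move=> mf ig fg; apply: le_integrable ig => //.
  by apply/measurable_EFinP.
move=> w _; rewrite /= lee_fin; apply: le_trans (fg w) _; exact: ler_norm.
Qed.

Lemma sq_le (v : vec) j : (v 0 j ^+ 2 <= sqnorm v)%R.
Proof.
rewrite /sqnorm /dotv (bigD1 j) //= expr2 lerDl.
by apply: sumr_ge0 => k _; rewrite -expr2 sqr_ge0.
Qed.

Lemma var_bound n (X : 'I_n -> Omega -> vec) (a : 'I_n -> vec) (omega : R) :
  (forall i (j : 'I_d), measurable_fun setT (fun w => X i w 0 j)) ->
  (forall i (j : 'I_d), P.-integrable setT (fun w => (X i w 0 j)%:E)) ->
  (forall i (j : 'I_d), (\int[P]_w (X i w 0 j)%:E = 0)%E) ->
  (forall i, (\int[P]_w (sqnorm (X i w))%:E <= (omega * sqnorm (a i))%:E)%E) ->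
  (forall i k (j : 'I_d), i != k -> forall A B : set R, measurable A -> measurable B ->
     P ((fun w => X i w 0 j) @^-1` A `&` (fun w => X k w 0 j) @^-1` B) =
     (P ((fun w => X i w 0%R j) @^-1` A) * P ((fun w => X k w 0%R j) @^-1` B))%E) ->
  (\int[P]_w (sqnorm (n%:R^-1 *: \sum_(i < n) X i w))%:E <=
  (omega / n%:R ^+ 2 * \sum_(i < n) sqnorm (a i))%:E)%E.
Proof.
move=> mX iX eX vX ind.
have msq i : measurable_fun setT (fun w => sqnorm (X i w)).
  rewrite /sqnorm /dotv; apply: measurable_sum => j; exact: measurable_funM.
have isq i : P.-integrable setT (fun w => (sqnorm (X i w))%:E).
  apply/integrableP; split; first by apply/measurable_EFinP.
  under eq_integral do rewrite gee0_abs ?lee_fin ?sqnorm_ge0 //.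
  by apply: le_lt_trans (vX i) _; rewrite ltry.
have iprod i k j : P.-integrable setT (fun w => (X i w 0 j * X k w 0 j)%:E).
  apply: (@int_le _ (fun w => sqnorm (X i w) + sqnorm (X k w))).
  - exact: measurable_funM.
  - exact: (integrableD measurableT (isq i) (isq k)).
  move=> w; apply: le_trans (lerD (sq_le (X i w) j) (sq_le (X k w) j)).
  rewrite ler_norml; apply/andP; split; rewrite !expr2.
    have := sqr_ge0 (X i w 0 j + X k w 0 j); nra.
  have := sqr_ge0 (X i w 0 j - X k w 0 j); nra.
have idot i k : P.-integrable setT (fun w => (dotv (X i w) (X k w))%:E).
  rewrite (_ : (fun w => _) = (fun w => \sum_(j < d) (X i w 0 j * X k w 0 j)%:E)); last first.
    by apply/funext => w; rewrite sumEFin.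
  by apply: (integrable_sum measurableT) => j _; exact: iprod.
have Edot i k : i != k -> (\int[P]_w (dotv (X i w) (X k w))%:E = 0)%E.
  move=> ik.
  rewrite (_ : (fun w => _) = (fun w => \sum_(j < d) (X i w 0 j * X k w 0 j)%:E)); last first.
    by apply/funext => w; rewrite sumEFin.
  rewrite (integral_sum measurableT); last by move=> j; exact: iprod.
  apply: big1 => j _.
  by rewrite (indep_mean (mX i j) (mX k j) (iX i j) (iX k j) (iprod i k j) (ind i k j ik)) eX mul0e.
have E : forall w, sqnorm (n%:R^-1 *: \sum_(i < n) X i w) =
    n%:R^-1 ^+ 2 * \sum_(i < n) \sum_(k < n) dotv (X i w) (X k w).
  by move=> w; rewrite sqnormZ sqnorm_sum.
under eq_integral do rewrite E.
have Isum : (\int[P]_w (\sum_(i < n) \sum_(k < n) dotv (X i w) (X k w))%:E =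
    \sum_(i < n) \sum_(k < n) \int[P]_w (dotv (X i w) (X k w))%:E)%E.
  rewrite (_ : (fun w => _) = (fun w => \sum_(i < n) \sum_(k < n) (dotv (X i w) (X k w))%:E)); last first.
    by apply/funext => w; rewrite -sumEFin; apply: eq_bigr => i _; rewrite sumEFin.
  rewrite (integral_sum measurableT); last first.
    by move=> i; apply: (integrable_sum measurableT) => k _; exact: idot.
  apply: eq_bigr => i _; rewrite (integral_sum measurableT) //.
have Iint : P.-integrable setT (fun w => (\sum_(i < n) \sum_(k < n) dotv (X i w) (X k w))%:E).
  rewrite (_ : (fun w => _) = (fun w => \sum_(i < n) \sum_(k < n) (dotv (X i w) (X k w))%:E)); last first.
    by apply/funext => w; rewrite -sumEFin; apply: eq_bigr => i _; rewrite sumEFin.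
  by apply: (integrable_sum measurableT) => i _; apply: (integrable_sum measurableT) => k _; exact: idot.
rewrite EFinM (integralZl measurableT Iint) Isum.
have diag : (\sum_(i < n) \sum_(k < n) \int[P]_w (dotv (X i w) (X k w))%:E =
    \sum_(i < n) \int[P]_w (sqnorm (X i w))%:E)%E.
  apply: eq_bigr => i _; rewrite (bigD1 i) //= big1 ?adde0 // => k ki.
  by apply: Edot; rewrite eq_sym.
rewrite diag.
apply: (@le_trans _ _ ((n%:R^-1 ^+ 2)%:E * \sum_(i < n) (omega * sqnorm (a i))%:E)%E).
  apply: lee_wpmul2l; first by rewrite lee_fin exprn_ge0 // invr_ge0.
  by apply: lee_sum => i _; exact: vX.
rewrite sumEFin -EFinM lee_fin mulr_sumr -mulr_sumr.
rewrite le_eqVlt; apply/orP; left; apply/eqP.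
by rewrite -mulr_sumr exprVn; ring.
Qed.
End Prob2.



Section Prob3.
Context {R : realType} {d : nat} {dd : measure_display} {Omega : measurableType dd} (P : probability Omega R).
Local Notation vec := 'rV[R]_d.

Lemma comp_meas (C : Omega -> vec -> vec) (x : vec) (j : 'I_d) :
  measurable_fun setT (fun w => C w x 0 j) ->
  measurable_fun setT (fun w => (C w x - x) 0 j).
Proof.
move=> mC; rewrite (_ : (fun w => _) = (fun w => C w x 0 j - x 0 j)); last first.
  by apply/funext => w; rewrite !mxE.
exact: measurable_funB.
Qed.

Lemma comp_int (C : Omega -> vec -> vec) (x : vec) (j : 'I_d) :
  P.-integrable setT (fun w => (C w x 0 j)%:E) ->
  P.-integrable setT (fun w => ((C w x - x) 0 j)%:E).
Proof.
move=> iC; rewrite (_ : (fun w => _) = (fun w => (C w x 0 j)%:E - (x 0 j)%:E)%E); last first.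
  by apply/funext => w; rewrite !mxE.
apply: (integrableB measurableT) => //.
exact: finite_measure_integrable_cst.
Qed.

Lemma comp_mean (C : Omega -> vec -> vec) (x : vec) (j : 'I_d) :
  P.-integrable setT (fun w => (C w x 0 j)%:E) ->
  (\int[P]_w (C w x 0 j)%:E = (x 0 j)%:E)%E ->
  (\int[P]_w ((C w x - x) 0 j)%:E = 0)%E.
Proof.
move=> iC eC; rewrite (_ : (fun w => _) = (fun w => (C w x 0 j)%:E - (x 0 j)%:E)%E); last first.
  by apply/funext => w; rewrite !mxE.
rewrite (integralB measurableT) //; last exact: finite_measure_integrable_cst.
rewrite eC integral_cst //.
rewrite [X in (_ * X)%E](_ : _ = 1%E); last exact: probability_setT.
by rewrite mule1 subee.
Qed.

Lemma mshift (c : R) (A : set R) : measurable A -> measurable [set r : R | A (r - c)].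
Proof.
move=> mA.
have mf : measurable_fun setT (fun r : R => r - c) by apply: measurable_funB.
by have := mf measurableT A mA; rewrite setTI.
Qed.

Lemma pfin (S : set Omega) : measurable S -> P S = (fine (P S))%:E.
Proof. by move=> mS; rewrite fineK // fin_num_measure. Qed.

Lemma pair_indep n (C : 'I_n -> Omega -> vec -> vec) (a : 'I_n -> vec) :
  (forall i (j : 'I_d), measurable_fun setT (fun w => C i w (a i) 0 j)) ->
  indep_compressors P C ->
  forall i k (j : 'I_d), i != k -> forall A B : set R, measurable A -> measurable B ->
  P ((fun w => (C i w (a i) - a i) 0 j) @^-1` A `&` (fun w => (C k w (a k) - a k) 0 j) @^-1` B) =
  (P ((fun w => (C i w (a i) - a i)%R 0%R j) @^-1` A) * P ((fun w => (C k w (a k) - a k)%R 0%R j) @^-1` B))%E.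
Proof.
move=> mC ind i k j ik A B mA mB.
have ki : k != i by rewrite eq_sym.
pose SA := [set r : R | A (r - a i 0 j)].
pose SB := [set r : R | B (r - a k 0 j)].
pose Bf := fun (i' : 'I_n) (j' : 'I_d) =>
  if (i' == i) && (j' == j) then SA else if (i' == k) && (j' == j) then SB else setT.
have mBf : forall i' j', measurable (Bf i' j').
  move=> i' j'; rewrite /Bf; case: ifP => _; first exact: mshift.
  by case: ifP => _; [exact: mshift | exact: measurableT].
have H := ind a Bf mBf.
set XA := (fun w => (C i w (a i) - a i) 0 j) @^-1` A.
set XB := (fun w => (C k w (a k) - a k) 0 j) @^-1` B.
have mXA : measurable XA.
  by have := comp_meas (mC i j) measurableT mA; rewrite setTI.
have mXB : measurable XB.
  by have := comp_meas (mC k j) measurableT mB; rewrite setTI.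
have e1 : [set w | forall i' j', Bf i' j' (C i' w (a i') 0 j')] = XA `&` XB.
  apply/seteqP; split => w /=.
    move=> Hw; split; rewrite /XA /XB /= !mxE.
      by have := Hw i j; rewrite /Bf !eqxx.
    by have := Hw k j; rewrite /Bf (negbTE ki) !eqxx.
  rewrite /XA /XB /= !mxE => -[HA HB] i' j'; rewrite /Bf.
  have [->|ni] := eqVneq i' i; have [->|nj] := eqVneq j' j => //=.
    by rewrite (negbTE ik).
  rewrite andbT; have [->|_] := eqVneq i' k => //=; exact: HB.
  by rewrite andbF.
have e2 : forall i', [set w | forall j', Bf i' j' (C i' w (a i') 0 j')] =
    if i' == i then XA else if i' == k then XB else setT.
  move=> i'; have [->|ni] := eqVneq i' i.
    apply/seteqP; split => w /=.
      by move=> Hw; have := Hw j; rewrite /Bf !eqxx /XA /= !mxE; apply.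
    rewrite /XA /= mxE => HA j'; rewrite /Bf eqxx /=.
    have [->|nj] := eqVneq j' j => /=; first by move: HA; rewrite !mxE.
    by rewrite (negbTE ik).
  have [->|nk] := eqVneq i' k.
    apply/seteqP; split => w /=.
      by move=> Hw; have := Hw j; rewrite /Bf (negbTE ki) !eqxx /XB /= !mxE; apply.
    rewrite /XB /= mxE => HB j'; rewrite /Bf (negbTE ki) eqxx /=.
    have [->|nj] := eqVneq j' j => /=; first by move: HB; rewrite !mxE.
    by [].
  apply/seteqP; split => w //= _ j'.
  by rewrite /Bf (negbTE ni) (negbTE nk).
rewrite e1 in H.
rewrite (bigD1 i) //= (bigD1 k) //= big1 in H; last first.
  move=> i' /andP[ni nk]; rewrite e2 (negbTE ni) (negbTE nk).
  by rewrite [P setT](_ : _ = 1%E) //; exact: probability_setT.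
rewrite !e2 eqxx (negbTE ki) eqxx mulr1 in H.
rewrite (pfin (measurableI _ _ mXA mXB)) H (pfin mXA) (pfin mXB).
by [].
Qed.
End Prob3.


Unset Implicit Arguments.
Theorem lemma5
  (R : realType) (d n : nat) (fs : 'I_n -> 'rV[R]_d -> R)
  (L : 'I_n -> R) (hatL Lf mu omega : R) (xstar : 'rV[R]_d)
  (dd : measure_display) (Omega : measurableType dd) (P : probability Omega R)
  (CDy : 'I_n -> Omega -> 'rV[R]_d -> 'rV[R]_d)
  (* state at iteration t (fixed by conditioning on the first t iterations) *)
  (theta : R) (w z : 'rV[R]_d) (hs : 'I_n -> 'rV[R]_d) (h : 'rV[R]_d) :
  (0 < n)%N ->
  (* Assumption 1 *)
  (forall i, smooth (L i) (fs i)) ->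
  0 < hatL ->
  (forall x y : 'rV[R]_d,
     n%:R^-1 * \sum_(i < n) sqnorm (grad (fs i) x - grad (fs i) y)
       <= hatL ^+ 2 * sqnorm (x - y)) ->
  (* Assumption 2 *)
  smooth Lf (avgf fs) ->
  (* Assumption 3 *)
  (forall i, convex_fun (fs i)) ->
  0 <= mu -> strongly_convex mu (avgf fs) ->
  (forall x, avgf fs xstar <= avgf fs x) ->
  (* compressors C_i^{D,y} in U(omega), drawn independently (Assumption 4) *)
  0 <= omega ->
  (forall i, unbiased_compressor P omega (CDy i)) ->
  indep_compressors P CDy ->
  (* algorithm quantities *)
  0 <= theta <= 1 ->
  h = n%:R^-1 *: \sum_(i < n) hs i ->
  let y := theta *: w + (1 - theta) *: z in
  let g := fun o : Omega =>
    h + n%:R^-1 *: \sum_(i < n) CDy i o (grad (fs i) y - hs i) in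
  (\int[P]_o (sqnorm (g o - grad (avgf fs) y))%:E <=
   ((2 * omega / (n%:R ^+ 2)) * \sum_(i < n) sqnorm (grad (fs i) z - hs i)
    + (4 * omega * Lmax L / n%:R) *
        (avgf fs z - avgf fs y - dotv (grad (avgf fs) y) (z - y)))%:E)%E.

Proof.
move=> n0 sm hatL0 hatLb smf cf mu0 scf xmin om Hcomp Hind th hH.
cbv zeta.
set y := theta *: w + (1 - theta) *: z.
have df : forall i x, differentiable (fs i) x by move=> i x; have [] := sm i.
pose a := fun i => grad (fs i) y - hs i.
pose X := fun i w => CDy i w (a i) - a i.
have eg : forall o, h + n%:R^-1 *: \sum_(i < n) CDy i o (grad (fs i) y - hs i) - grad (avgf fs) y = n%:R^-1 *: \sum_(i < n) X i o.
  move=> o; rewrite hH grad_avg // /X /a -scalerDr -scalerBr; congr (_ *: _).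
  rewrite !sumrB opprB addrA; congr (_ - _); exact: addrC.
under eq_integral do rewrite eg.
have mC : forall i (j : 'I_d), measurable_fun setT (fun w => CDy i w (a i) 0 j).
  by move=> i j; have [H _] := Hcomp i (a i); exact: H.
apply: le_trans.
  apply: (@var_bound R d dd Omega P n X a omega).
  - by move=> i j; apply: comp_meas; exact: mC.
  - by move=> i j; apply: comp_int; have [_ [H _]] := Hcomp i (a i); have [] := H j.
  - by move=> i j; apply: comp_mean; have [_ [H _]] := Hcomp i (a i); have [] := H j.
  - by move=> i; have [_ [_ H]] := Hcomp i (a i); exact: H.
  - exact: pair_indep.
rewrite lee_fin.
exact: det_bound.
Qed.
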